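(* Every closed guarded expression $\phi\in\mathcal{E}_0$ denotes the behavioural equivalence class of some state in a finite $T$-coalgebra (i.e., there are a finite coalgebra $D$ and a state $z$ of $D$ such that in every $T$-coalgebra $C$, $[\![\phi]\!]_C$ is the set of states behaviourally equivalent to $z$); conversely, for every state $x$ of a finite $T$-coalgebra there is $\phi\in\mathcal{E}_0$ whose denotation in this sense is the behavioural equivalence class of $x$.
   Context: Standing assumptions: $T:\mathbf{Set}\to\mathbf{Set}$ is a functor; $\mathcal{L}$ is a set of modalities with arities ($L/n$), each $L/n$ assigned an $n$-ary monotone singleton-preserving predicate lifting $[\![L]\!]$ for $T$ such that $\Lambda=\{[\![L]\!]\mid L\in\mathcal{L}\}$ is strongly expressive. (An $n$-ary predicate lifting is a family $\lambda_X:(\mathcal{P}X)^n\to\mathcal{P}(TX)$ with $\lambda_X(f^{-1}[A_1],\dots,f^{-1}[A_n])=(Tf)^{-1}[\lambda_Y(A_1,\dots,A_n)]$ for $f:X\to Y$; monotone if monotone in each argument; singleton-preserving if $|\lambda_X(\{x_1\},\dots,\{x_n\})|=1$ for all $x_i\in X$; $\Lambda$ strongly expressive if for every set $X$ and $t\in TX$ there are $\lambda/n\in\Lambda$, $x_i\in X$ with $\{t\}=\lambda_X(\{x_1\},\dots,\{x_n\})$.) Fix a set $V$ of variables. Expressions $\mathcal{E}$: $\phi::=z\mid\nu z.\,\phi\mid L(\phi_1,\dots,\phi_n)$. Closed: every variable occurrence bound by a $\nu$. Guarded: every variable occurrence is separated from its binding $\nu$ by at least one modality. $\mathcal{E}_0$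 is the set of closed guarded expressions. Semantics in a coalgebra $C=(X,\xi)$ under valuation $\kappa:V\to\mathcal{P}X$: $[\![z]\!]^\kappa=\kappa(z)$; $[\![L(\phi_1,\dots,\phi_n)]\!]^\kappa=\xi^{-1}[[\![L]\!]_X([\![\phi_1]\!]^\kappa,\dots,[\![\phi_n]\!]^\kappa)]$; $[\![\nu z.\phi]\!]^\kappa=$ greatest fixed point of $Y\mapsto[\![\phi]\!]^{\kappa[z\mapsto Y]}$; for closed $\phi$ write $[\![\phi]\!]_C$. States of coalgebras are behaviourally equivalent if some coalgebra morphisms (maps $h$ with $Th\circ\xi=\zeta\circ h$) into a common coalgebra identify them. *)

(* Defs.v *)
From Stdlib Require Import List.
From Stdlib Require Fin.
Set Implicit Arguments.

Definition is_functor (T : Type -> Type)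
  (fmap : forall X Y : Type, (X -> Y) -> T X -> T Y) : Prop :=
  (forall (X : Type) (t : T X), fmap X X (fun x => x) t = t) /\
  (forall (X Y Z : Type) (f : X -> Y) (g : Y -> Z) (t : T X),
      fmap X Z (fun x => g (f x)) t = fmap Y Z g (fmap X Y f t)).

(** Subsets of X are predicates X -> Prop; an n-tuple of subsets is Fin.t n -> (X -> Prop). *)
Definition plifting (T : Type -> Type) (n : nat) : Type :=
  forall X : Type, (Fin.t n -> X -> Prop) -> T X -> Prop.

Definition is_natural (T : Type -> Type)
  (fmap : forall X Y : Type, (X -> Y) -> T X -> T Y) (n : nat) (lam : plifting T n) : Prop :=
  forall (X Y : Type) (f : X -> Y) (A : Fin.t n -> Y -> Prop) (t : T X),
    lam X (fun i x => A i (f x)) t <-> lam Y A (fmap X Y f t).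

Definition is_monotone (T : Type -> Type) (n : nat) (lam : plifting T n) : Prop :=
  forall (X : Type) (A B : Fin.t n -> X -> Prop),
    (forall i x, A i x -> B i x) -> forall t, lam X A t -> lam X B t.

Definition singletons (X : Type) (n : nat) (xs : Fin.t n -> X) : Fin.t n -> X -> Prop :=
  fun i y => y = xs i.

Definition is_singleton_preserving (T : Type -> Type) (n : nat) (lam : plifting T n) : Prop :=
  forall (X : Type) (xs : Fin.t n -> X),
    exists t : T X, forall t', lam X (singletons xs) t' <-> t' = t.

Definition strongly_expressive (T : Type -> Type) (Lab : Type) (ar : Lab -> nat)
  (lam : forall l : Lab, plifting T (ar l)) : Prop :=
  forall (X : Type) (t : T X), exists (l : Lab) (xs : Fin.t (ar l) -> X),
    forall t', lam l X (singletons xs) t' <-> t' = t.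

Inductive Expr (V Lab : Type) (ar : Lab -> nat) : Type :=
| EVar : V -> Expr V ar
| ENu : V -> Expr V ar -> Expr V ar
| EMod : forall l : Lab, (Fin.t (ar l) -> Expr V ar) -> Expr V ar.

Arguments EVar {V Lab ar} _.
Arguments ENu {V Lab ar} _ _.
Arguments EMod {V Lab ar} _ _.

Section Syntax.
Variables (V Lab : Type) (ar : Lab -> nat).

Fixpoint free (z : V) (phi : Expr V ar) : Prop :=
  match phi with
  | EVar y => y = z
  | ENu y p => y <> z /\ free z p
  | EMod l args => exists i, free z (args i)
  end.

Fixpoint unguarded_free (z : V) (phi : Expr V ar) : Prop :=
  match phi with
  | EVar y => y = z
  | ENu y p => y <> z /\ unguarded_free z p
  | EMod _ _ => False
  end.

Fixpoint guarded (phi : Expr V ar) : Prop :=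
  match phi with
  | EVar _ => True
  | ENu z p => ~ unguarded_free z p /\ guarded p
  | EMod l args => forall i, guarded (args i)
  end.

Definition closed (phi : Expr V ar) : Prop := forall z, ~ free z phi.

End Syntax.

Section Semantics.
Variables (T : Type -> Type) (Lab : Type) (ar : Lab -> nat)
  (lam : forall l : Lab, plifting T (ar l))
  (V : Type) (Veq : forall a b : V, {a = b} + {a <> b}).

Definition upd (X : Type) (kappa : V -> X -> Prop) (z : V) (S : X -> Prop) : V -> X -> Prop :=
  fun y => if Veq y z then S else kappa y.

Definition gfp (X : Type) (F : (X -> Prop) -> X -> Prop) : X -> Prop :=
  fun x => exists S : X -> Prop, (forall y, S y -> F S y) /\ S x.

Fixpoint sem (X : Type) (xi : X -> T X) (kappa : V -> X -> Prop) (phi : Expr V ar)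
  : X -> Prop :=
  match phi with
  | EVar z => kappa z
  | ENu z p => gfp (fun S => sem xi (upd kappa z S) p)
  | EMod l args => fun x => @lam l X (fun i => sem xi kappa (args i)) (xi x)
  end.

(** denotation of a closed expression (valuation irrelevant; we use the empty one) *)
Definition sem_closed (X : Type) (xi : X -> T X) (phi : Expr V ar) : X -> Prop :=
  sem xi (fun _ _ => False) phi.

End Semantics.

Definition is_coalg_morphism (T : Type -> Type)
  (fmap : forall X Y : Type, (X -> Y) -> T X -> T Y)
  (X : Type) (xi : X -> T X) (Y : Type) (zeta : Y -> T Y) (h : X -> Y) : Prop :=
  forall x, fmap X Y h (xi x) = zeta (h x).

Definition beh_equiv (T : Type -> Type)
  (fmap : forall X Y : Type, (X -> Y) -> T X -> T Y)
  (X : Type) (xi : X -> T X) (x : X) (Y : Type) (zeta : Y -> T Y) (y : Y) : Prop :=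
  exists (Z : Type) (eta : Z -> T Z) (h1 : X -> Z) (h2 : Y -> Z),
    @is_coalg_morphism T fmap X xi Z eta h1 /\ @is_coalg_morphism T fmap Y zeta Z eta h2 /\ h1 x = h2 y.

Definition finite_type (X : Type) : Prop := exists l : list X, forall x, In x l.

(* Main.v *)
Require Import Defs.
From Stdlib Require Import List Lia.
From Stdlib Require Fin.
From Stdlib Require Import ClassicalEpsilon FunctionalExtensionality PropExtensionality ProofIrrelevance.
From Stdlib Require Import Relations.Relation_Operators.

Section Main.
Variables (T : Type -> Type) (fmap : forall X Y : Type, (X -> Y) -> T X -> T Y).
Hypothesis HT : is_functor T fmap.
Variables (Lab : Type) (ar : Lab -> nat) (lam : forall l : Lab, plifting T (ar l)).
Hypothesis Hnat : forall l, @is_natural T fmap (ar l) (lam l).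
Hypothesis Hmon : forall l, @is_monotone T (ar l) (lam l).
Hypothesis Hsing : forall l, @is_singleton_preserving T (ar l) (lam l).

Lemma mon (l : Lab) (X : Type) (A B : Fin.t (ar l) -> X -> Prop) t :
  (forall i x, A i x -> B i x) -> lam l X A t -> lam l X B t.
Proof. intros H. apply (Hmon l X A B H). Qed.

Section Coal.
Variables (D X : Type) (d : D -> T D) (xi : X -> T X) (lab : D -> Lab)
  (xs : forall s, Fin.t (ar (lab s)) -> D).
Hypothesis hd : forall s, lam (lab s) D (singletons (xs s)) (d s).

Lemma lemmaB : forall s y, @beh_equiv T fmap D d s X xi y ->
  lam (lab s) X (fun i y' => @beh_equiv T fmap D d (xs s i) X xi y') (xi y).
Proof.
  intros s y [Z [eta [h1 [h2 [m1 [m2 e]]]]]].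
  assert (H1 : lam (lab s) Z (fun i w => w = h1 (xs s i)) (fmap X Z h2 (xi y))).
  { rewrite m2, <- e, <- m1. apply (proj1 (Hnat (lab s) D Z h1 _ (d s))).
    apply (mon _ _ (singletons (xs s))); [|apply hd]. intros i y' ->. reflexivity. }
  apply (proj2 (Hnat _ X Z h2 _ (xi y))) in H1.
  eapply mon; [|exact H1]. intros i y' E. exists Z, eta, h1, h2.
  split; [|split]; auto.
Qed.

Variable P : D -> X -> Prop.
Hypothesis HP : forall s y, P s y -> lam (lab s) X (fun i => P (xs s i)) (xi y).

Definition Gen (a b : D + X) : Prop :=
  match a, b with inl s, inr y => P s y | _, _ => False end.
Definition Eq := clos_refl_sym_trans (D + X) Gen.
Definition Qt := {C : D + X -> Prop | exists w, C = Eq w}.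
Definition pi (w : D + X) : Qt := exist _ (Eq w) (ex_intro _ w eq_refl).

Lemma Eq_pi a b : Eq a b -> pi a = pi b.
Proof.
  intros H. unfold pi.
  assert (E : Eq a = Eq b).
  { apply functional_extensionality; intro c. apply propositional_extensionality.
    split; intro H'.
    - eapply rst_trans; [apply rst_sym; exact H|exact H'].
    - eapply rst_trans; [exact H|exact H']. }
  revert E. generalize (ex_intro (fun w => Eq a = Eq w) a eq_refl).
  generalize (ex_intro (fun w => Eq b = Eq w) b eq_refl).
  intros p1 p2 E. revert p1 p2. rewrite E. intros p1 p2.
  f_equal. apply proof_irrelevance.
Qed.

Lemma pi_Eq a b : pi a = pi b -> Eq a b.
Proof.
  intros H. assert (E : Eq a = Eq b) by (apply (f_equal (@proj1_sig _ _)) in H; exact H).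
  rewrite E. apply rst_refl.
Qed.

Definition rep (q : Qt) : D + X := proj1_sig (constructive_indefinite_description _ (proj2_sig q)).

Lemma pi_rep q : pi (rep q) = q.
Proof.
  destruct q as [C HC]. unfold rep; simpl.
  destruct (constructive_indefinite_description _ HC) as [w Hw]; simpl.
  unfold pi. subst C. f_equal. apply proof_irrelevance.
Qed.

Definition omega (w : D + X) : T (D + X) :=
  match w with inl s => fmap D (D + X) inl (d s) | inr y => fmap X (D + X) inr (xi y) end.

Definition zeta (q : Qt) : T Qt := fmap _ _ pi (omega (rep q)).

Lemma fcomp A B C (f : A -> B) (g : B -> C) t :
  fmap A C (fun x => g (f x)) t = fmap B C g (fmap A B f t).
Proof. apply (proj2 HT). Qed.

Lemma step_ok s y : P s y -> fmap _ _ pi (omega (inl s)) = fmap _ _ pi (omega (inr y)).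
Proof.
  intros Hp. simpl. rewrite <- !fcomp.
  destruct (Hsing (lab s) Qt (fun i => pi (inl (xs s i)))) as [t0 Ht0].
  transitivity t0; [|symmetry]; apply Ht0.
  - apply (proj1 (Hnat (lab s) D Qt (fun y0 => pi (inl y0)) _ (d s))).
    eapply mon; [|apply hd]. intros i y0 ->. reflexivity.
  - apply (proj1 (Hnat (lab s) X Qt (fun y0 => pi (inr y0)) _ (xi y))).
    eapply mon; [|apply HP; exact Hp]. intros i y0 H0. unfold singletons.
    apply Eq_pi. apply rst_sym. apply rst_step. exact H0.
Qed.

Lemma Eq_ok a b : Eq a b -> fmap _ _ pi (omega a) = fmap _ _ pi (omega b).
Proof.
  induction 1.
  - destruct x as [s|y1]; destruct y as [s'|y2]; simpl in H; try contradiction.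
    apply step_ok; exact H.
  - reflexivity.
  - symmetry; assumption.
  - congruence.
Qed.

Lemma pi_morph w : fmap _ _ pi (omega w) = zeta (pi w).
Proof.
  unfold zeta. apply Eq_ok. apply pi_Eq. symmetry. apply pi_rep.
Qed.

Lemma lemmaA : forall s y, P s y -> @beh_equiv T fmap D d s X xi y.
Proof.
  intros s y Hp. exists Qt, zeta, (fun s0 => pi (inl s0)), (fun y0 => pi (inr y0)).
  split; [|split].
  - intro s0. rewrite fcomp. apply (pi_morph (inl s0)).
  - intro y0. rewrite fcomp. apply (pi_morph (inr y0)).
  - apply Eq_pi. apply rst_step. exact Hp.
Qed.
End Coal.

Variables (V : Type) (Veq : forall a b : V, {a = b} + {a <> b}).

Record Rep : Type := mkRep { St : Type; Sfin : finite_type St; nlab : St -> Lab;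
  nsc : forall s, Fin.t (ar (nlab s)) -> St + V; root : St + V }.

Definition val (R : Rep) (X : Type) (P : St R -> X -> Prop) (k : V -> X -> Prop) (c : St R + V)
  : X -> Prop := match c with inl s => P s | inr v => k v end.
Definition Post (R : Rep) (X : Type) (xi : X -> T X) (k : V -> X -> Prop) (P : St R -> X -> Prop) :=
  forall s x, P s x -> lam (nlab R s) X (fun j => val R X P k (nsc R s j)) (xi x).
Definition G (R : Rep) (X : Type) (xi : X -> T X) (k : V -> X -> Prop) (s : St R) (x : X) :=
  exists P, Post R X xi k P /\ P s x.
Definition occ (R : Rep) (w : V) := root R = inr w \/ exists s j, nsc R s j = inr w.

Lemma val_mono R X (P P' : St R -> X -> Prop) k c x :
  (forall s y, P s y -> P' s y) -> val R X P k c x -> val R X P' k c x.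
Proof. destruct c; simpl; auto. Qed.

Lemma G_post R X xi k : Post R X xi k (G R X xi k).
Proof.
  intros s x [P [HP Hs]]. eapply mon; [|apply HP; exact Hs].
  intros j y. apply val_mono. intros s' y' H'. exists P; auto.
Qed.

Lemma G_fix R X xi k s x :
  lam (nlab R s) X (fun j => val R X (G R X xi k) k (nsc R s j)) (xi x) -> G R X xi k s x.
Proof.
  intros H. exists (fun s' y => G R X xi k s' y \/ (s' = s /\ y = x)). split; [|right; auto].
  intros s' y [Hg|[-> ->]].
  - eapply mon; [|apply G_post; exact Hg]. intros j y'. apply val_mono. auto.
  - eapply mon; [|exact H]. intros j y'. apply val_mono. auto.
Qed.

Notation semV X xi k phi := (@sem T Lab ar lam V Veq X xi k phi).

Lemma fin_list : forall n, exists l : list (Fin.t n), forall i, In i l.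
Proof.
  induction n.
  - exists nil. intro i. exact (Fin.case0 _ i).
  - destruct IHn as [l Hl]. exists (Fin.F1 :: map Fin.FS l). intro i.
    pattern i; apply Fin.caseS'. left; auto. intro p; right; apply in_map; auto.
Qed.

Lemma finite_sig n (F : Fin.t n -> Type) :
  (forall i, finite_type (F i)) -> finite_type (option {i : Fin.t n & F i}).
Proof.
  intros HF. destruct (fin_list n) as [li Hli].
  exists (None :: map Some (flat_map (fun i => map (existT F i)
      (proj1_sig (constructive_indefinite_description _ (HF i)))) li)).
  intros [[i s]|]; [right|left; auto]. apply in_map. apply in_flat_map. exists i.
  split; auto. apply in_map.
  destruct (constructive_indefinite_description _ (HF i)) as [ls Hls]; simpl; auto.
Qed.

Section Comb.
Variables (l : Lab) (Rs : Fin.t (ar l) -> Rep).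
Definition CSt := option {i : Fin.t (ar l) & St (Rs i)}.
Definition emb (i : Fin.t (ar l)) (c : St (Rs i) + V) : CSt + V :=
  match c with inl s => inl (Some (existT _ i s)) | inr w => inr w end.
Definition clab (c : CSt) : Lab :=
  match c with None => l | Some (existT _ i s) => nlab (Rs i) s end.
Definition csc (c : CSt) : Fin.t (ar (clab c)) -> CSt + V :=
  match c as c0 return Fin.t (ar (clab c0)) -> CSt + V with
  | None => fun i => emb i (root (Rs i))
  | Some (existT _ i s) => fun j => emb i (nsc (Rs i) s j) end.
Definition combRep : Rep :=
  mkRep CSt (finite_sig _ _ (fun i => Sfin (Rs i))) clab csc (inl None).

Lemma comb_G X xi k i s y : G combRep X xi k (Some (existT _ i s)) y <-> G (Rs i) X xi k s y.
Proof.
  split.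
  - intros [P [HP Hs]]. exists (fun s' y' => P (Some (existT _ i s')) y'). split; auto.
    intros s' y' H'. specialize (HP _ _ H'). simpl in HP.
    eapply mon; [|exact HP]. intros j x. cbv beta. generalize (nsc (Rs i) s' j) as c. intros [c|c]; simpl; auto.
  - intros H. exists (fun c y' => match c with None => False
                    | Some (existT _ j s') => G (Rs j) X xi k s' y' end).
    split; [|exact H].
    intros [[j s']|] y' H'; [|contradiction]. simpl.
    eapply mon; [|apply G_post; exact H']. intros j' x. cbv beta. generalize (nsc (Rs j) s' j') as c. intros [c|c]; simpl; auto.
Qed.

Lemma comb_val X xi k i c y :
  val combRep X (G combRep X xi k) k (emb i c) y <-> val (Rs i) X (G (Rs i) X xi k) k c y.
Proof. destruct c; simpl; [apply comb_G|tauto]. Qed.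

Lemma comb_root X xi k x :
  G combRep X xi k None x <->
  lam l X (fun i => val (Rs i) X (G (Rs i) X xi k) k (root (Rs i))) (xi x).
Proof.
  split; intro H.
  - apply G_post in H. simpl in H. eapply mon; [|exact H]. intros i y. apply comb_val.
  - apply G_fix. simpl. eapply mon; [|exact H]. intros i y. apply comb_val.
Qed.
End Comb.

Section Nu.
Variables (z : V) (Rp : Rep).
Definition redirect (c : St Rp + V) : St Rp + V :=
  match c with inl s => inl s | inr w => if Veq w z then root Rp else inr w end.
Definition nuRep : Rep := mkRep (St Rp) (Sfin Rp) (nlab Rp) (fun s j => redirect (nsc Rp s j)) (root Rp).

Lemma nu_G (p : Expr V ar) X xi k x r (Hr : root Rp = inl r)
  (Hsem : forall k' y, semV X xi k' p y <-> val Rp X (G Rp X xi k') k' (root Rp) y) :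
  semV X xi k (ENu z p) x <-> G nuRep X xi k r x.
Proof.
  simpl. split.
  - intros [S [HS Sx]]. exists (G Rp X xi (upd Veq k z S)). split.
    + intros s y Hy. apply G_post in Hy. simpl. eapply mon; [|exact Hy].
      intros j y'. cbv beta. generalize (nsc Rp s j) as c. intros [c|w]; simpl; auto.
      unfold upd. destruct (Veq w z) as [->|ne]; auto.
      intro HSy. specialize (HS _ HSy). apply Hsem in HS. rewrite Hr in HS. simpl in HS.
      rewrite Hr. simpl. exact HS.
    + apply HS in Sx. apply Hsem in Sx. rewrite Hr in Sx. exact Sx.
  - intros Hg. exists (G nuRep X xi k r). split; auto.
    intros y Hy. apply Hsem. rewrite Hr. simpl. exists (G nuRep X xi k). split; auto.
    intros s y' H'. apply G_post in H'. simpl in H'. eapply mon; [|exact H'].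
    intros j y0. cbv beta. generalize (nsc Rp s j) as c. intros [c|w]; simpl; auto.
    unfold upd. destruct (Veq w z) as [->|ne]; auto.
    rewrite Hr. simpl. auto.
Qed.

Lemma nu_var (p : Expr V ar) X xi k x w (Hr : root Rp = inr w) (ne : w <> z)
  (Hsem : forall k' y, semV X xi k' p y <-> val Rp X (G Rp X xi k') k' (root Rp) y) :
  semV X xi k (ENu z p) x <-> k w x.
Proof.
  simpl. split.
  - intros [S [HS Sx]]. apply HS, Hsem in Sx. rewrite Hr in Sx. simpl in Sx.
    unfold upd in Sx. destruct (Veq w z); [contradiction|exact Sx].
  - intros H. exists (k w). split; auto. intros y Hy. apply Hsem. rewrite Hr. simpl.
    unfold upd. destruct (Veq w z); [contradiction|exact Hy].
Qed.
End Nu.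

Definition spec (phi : Expr V ar) (R : Rep) : Prop :=
  (forall w, root R = inr w -> unguarded_free w phi) /\ (forall w, occ R w -> free w phi) /\
  (forall X xi k x, semV X xi k phi x <-> val R X (G R X xi k) k (root R) x).


Lemma rep_exists : forall phi : Expr V ar, guarded phi -> exists R, spec phi R.
Proof.
  induction phi as [w | z p IH | l args IH]; simpl; intros Hg.
  - exists (mkRep Empty_set (ex_intro _ nil (fun e : Empty_set => match e with end))
      (fun e : Empty_set => match e with end) (fun e : Empty_set => match e with end) (inr w)).
    split; [|split].
    + simpl. intros w' E. injection E. auto.
    + intros w' [E|[s _]]; [|destruct s]. simpl in E. injection E. auto.
    + intros X xi k x. simpl. tauto.
  - destruct Hg as [Hug Hg]. destruct (IH Hg) as [Rp [H1 [H2 H3]]].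
    exists (nuRep z Rp).
    assert (Hrz : root Rp <> inr z) by (intro E; apply Hug, H1, E).
    split; [|split].
    + simpl. intros w E. split; [|apply H1, E]. intro; subst. apply Hrz, E.
    + intros w [E|[s [j E]]]; simpl in *.
      * split; [|apply H2; left; exact E]. intro; subst; apply Hrz, E.
      * unfold redirect in E. destruct (nsc Rp s j) as [c|w'] eqn:E2; [discriminate|].
        destruct (Veq w' z) as [->|ne].
        -- split; [|apply H2; left; exact E]. intro; subst; apply Hrz, E.
        -- injection E; intros <-. split; auto. apply H2. right. exists s, j. exact E2.
    + intros X xi k x. simpl.
      assert (Hcase : {r | root Rp = inl r} + {w | root Rp = inr w})
        by (destruct (root Rp); eauto).
      destruct Hcase as [[r Er]|[w Er]].
      * rewrite Er; simpl. apply (nu_G z Rp p X xi k x r Er). apply H3.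
      * rewrite Er; simpl. apply (nu_var z Rp p X xi k x w Er); [intro; subst; apply Hrz, Er|apply H3].
  - assert (Hc : forall i, {R : Rep | spec (args i) R}).
    { intro i. apply constructive_indefinite_description. apply IH. apply Hg. }
    set (Rs := fun i => proj1_sig (Hc i)).
    assert (HR : forall i, spec (args i) (Rs i)) by (intro i; exact (proj2_sig (Hc i))).
    exists (combRep l Rs). split; [|split].
    + simpl. discriminate.
    + intros w [E|[c [j E]]]; [discriminate|].
      destruct c as [[i s]|]; simpl in E.
      * exists i. destruct (HR i) as [_ [H2 _]]. apply H2. right. exists s, j.
        destruct (nsc (Rs i) s j); simpl in E; congruence.
      * exists j. destruct (HR j) as [_ [H2 _]]. apply H2. left.
        destruct (root (Rs j)); simpl in E; congruence.
    + intros X xi k x. simpl. rewrite comb_root. split; apply mon; intros i y;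
        destruct (HR i) as [_ [_ H3]]; apply H3.
Qed.

Lemma part1 (phi : Expr V ar) : closed phi -> guarded phi ->
  exists (D : Type) (d : D -> T D) (z0 : D), finite_type D /\
    forall (X : Type) (xi : X -> T X) (x : X),
      @sem_closed T Lab ar lam V Veq X xi phi x <-> @beh_equiv T fmap D d z0 X xi x.
Proof.
  intros Hc Hg. destruct (rep_exists phi Hg) as [R [H1 [H2 H3]]].
  assert (noocc : forall w, ~ occ R w) by (intros w Hw; apply (Hc w); apply H2; exact Hw).
  assert (Hr : {r | root R = inl r}).
  { destruct (root R) as [r|w] eqn:E; [eauto|exfalso; apply (noocc w); left; exact E]. }
  destruct Hr as [r Er].
  set (strip := fun c : St R + V => match c with inl s => s | inr _ => r end).
  set (xs := fun s j => strip (nsc R s j)).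
  assert (Hd : forall s, {t | forall t', lam (nlab R s) (St R) (singletons (xs s)) t' <-> t' = t})
    by (intro; apply constructive_indefinite_description; apply Hsing).
  set (d := fun s => proj1_sig (Hd s)).
  assert (hd : forall s, lam (nlab R s) _ (singletons (xs s)) (d s))
    by (intro s; apply (proj2_sig (Hd s)); reflexivity).
  assert (Hv : forall X P k s j y, val R X P k (nsc R s j) y <-> P (xs s j) y).
  { intros. unfold xs. destruct (nsc R s j) as [c|w] eqn:E. simpl. tauto.
    exfalso. apply (noocc w). right. exists s, j. exact E. }
  exists (St R), d, r. split; [apply Sfin|]. intros X xi x. unfold sem_closed.
  rewrite H3, Er. simpl. split.
  - apply (lemmaA _ _ d xi (nlab R) xs hd (G R X xi (fun _ _ => False))).
    intros s y Hy. apply G_post in Hy. eapply mon; [|exact Hy]. intros j y'. apply Hv.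
  - intros Hb. exists (fun s y => @beh_equiv T fmap _ d s X xi y). split; auto.
    intros s y Hy. apply (lemmaB _ _ d xi (nlab R) xs hd) in Hy.
    eapply mon; [|exact Hy]. intros j y' H.
    change (val R X (fun s0 y => @beh_equiv T fmap _ d s0 X xi y) (fun _ _ => False) (nsc R s j) y').
    apply Hv. exact H.
Qed.

Section Sys.
Variables (D : Type) (lab : D -> Lab) (xs : forall s, Fin.t (ar (lab s)) -> D) (v : D -> V).

Fixpoint phiF (n : nat) (s : D) (vis : list D) : Expr V ar :=
  match n with
  | 0 => EVar (v s)
  | S n' => if excluded_middle_informative (In s vis) then EVar (v s)
           else ENu (v s) (EMod (lab s) (fun i => phiF n' (xs s i) (s :: vis)))
  end.

Lemma guarded_phi n : forall s vis, guarded (phiF n s vis).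
Proof.
  induction n; intros s vis; simpl; auto.
  destruct (excluded_middle_informative (In s vis)); simpl; auto.
Qed.

Variables (ld : list D) (Hld : forall s, In s ld) (vinj : forall a b, v a = v b -> a = b).

Definition meas (vis : list D) : nat :=
  length (filter (fun y => if excluded_middle_informative (In y vis) then false else true) ld).

Lemma filter_le {A} (f f' : A -> bool) (l : list A) :
  (forall y, f' y = true -> f y = true) -> length (filter f' l) <= length (filter f l).
Proof.
  intros H. induction l as [|a l IHl]; simpl; auto.
  destruct (f' a) eqn:E1; [rewrite (H a E1); simpl; lia|].
  destruct (f a); simpl; lia.
Qed.

Lemma filter_lt {A} (f f' : A -> bool) (l : list A) a :
  In a l -> f a = true -> f' a = false -> (forall y, f' y = true -> f y = true) ->
  length (filter f' l) < length (filter f l).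
Proof.
  intros Ha Hf Hf' H. induction l as [|b l IHl]; [destruct Ha|]. simpl.
  destruct Ha as [<-|Ha].
  - rewrite Hf, Hf'. simpl. pose proof (filter_le f f' l H). lia.
  - specialize (IHl Ha). destruct (f' b) eqn:E1; [rewrite (H b E1); simpl; lia|].
    destruct (f b); simpl; lia.
Qed.

Lemma meas_lt s vis : ~ In s vis -> meas (s :: vis) < meas vis.
Proof.
  intros Hn. unfold meas. apply (filter_lt _ _ _ s (Hld s)).
  - destruct (excluded_middle_informative (In s vis)); [contradiction|auto].
  - destruct (excluded_middle_informative (In s (s :: vis))) as [_|n]; [auto|exfalso; apply n; left; auto].
  - intros y. destruct (excluded_middle_informative (In y (s :: vis))); [discriminate|].
    destruct (excluded_middle_informative (In y vis)); auto. exfalso; apply n; right; auto.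
Qed.

Lemma meas0 s vis : meas vis = 0 -> In s vis.
Proof.
  intros H. destruct (excluded_middle_informative (In s vis)) as [i|n]; auto. exfalso.
  unfold meas in H. apply length_zero_iff_nil in H.
  assert (Hs : In s (filter (fun y => if excluded_middle_informative (In y vis) then false else true) ld)).
  { apply filter_In. split; auto. destruct (excluded_middle_informative (In s vis)); [contradiction|auto]. }
  rewrite H in Hs. destruct Hs.
Qed.

Lemma free_phi n : forall s vis w, meas vis <= n -> free w (phiF n s vis) ->
  exists s', In s' vis /\ w = v s'.
Proof.
  induction n; intros s vis w Hm Hf; simpl in Hf.
  - exists s. split; auto. apply meas0. lia.
  - destruct (excluded_middle_informative (In s vis)) as [Hi|Hn]; simpl in Hf.
    + exists s; auto.
    + destruct Hf as [ne [i Hf]]. pose proof (meas_lt s vis Hn).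
      destruct (IHn (xs s i) (s :: vis) w ltac:(lia) Hf) as [s' [[<-|Hs'] E]].
      * exfalso; apply ne; auto.
      * exists s'; auto.
Qed.

Variables (X : Type) (xi : X -> T X).

Definition Post2 (vis : list D) (K : D -> X -> Prop) (P : D -> X -> Prop) : Prop :=
  forall s x, P s x -> (In s vis -> K s x) /\ (~ In s vis -> lam (lab s) X (fun i => P (xs s i)) (xi x)).

Lemma Post2_union vis K : Post2 vis K (fun s y => exists P, Post2 vis K P /\ P s y).
Proof.
  intros s y [P [HP Hy]]. destruct (HP _ _ Hy) as [a b]. split; auto.
  intro Hn. eapply mon; [|apply b; auto]. intros i y' H'. exists P; auto.
Qed.

Lemma claim1 n : forall vis s k x, meas vis <= n -> semV X xi k (phiF n s vis) x ->
  exists P, Post2 vis (fun s' => k (v s')) P /\ P s x.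
Proof.
  assert (varcase : forall vis s k x, In s vis -> k (v s) x ->
            exists P, Post2 vis (fun s' => k (v s')) P /\ P s x).
  { intros vis s k x Hi Hk. exists (fun s' y => s' = s /\ k (v s) y). split; auto.
    intros s' y [-> Hy]. split; auto. intro; contradiction. }
  induction n; intros vis s k x Hm H; simpl in H.
  - apply varcase; auto. apply meas0. lia.
  - destruct (excluded_middle_informative (In s vis)) as [Hi|Hn]; simpl in H; [apply varcase; auto|].
    destruct H as [S [HS Sx]].
    set (k' := upd Veq k (v s) S).
    pose proof (meas_lt s vis Hn) as Hlt.
    set (Q := fun s' y => exists P, Post2 (s :: vis) (fun s0 => k' (v s0)) P /\ P s' y).
    assert (Qpost : Post2 (s :: vis) (fun s0 => k' (v s0)) Q) by apply Post2_union.
    assert (semQ : forall i y, semV X xi k' (phiF n (xs s i) (s :: vis)) y -> Q (xs s i) y).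
    { intros i y Hy. apply (IHn (s :: vis) (xs s i) k' y); auto. lia. }
    set (P0 := fun s' y => Q s' y \/ (s' = s /\ S y)).
    assert (Key : forall y, S y -> lam (lab s) X (fun i => P0 (xs s i)) (xi y)).
    { intros y Sy. specialize (HS y Sy). simpl in HS. eapply mon; [|exact HS].
      intros i y' H'. left. apply semQ. exact H'. }
    exists P0. split; [|right; auto].
    intros s' y [Hq|[-> Sy]].
    + destruct (Qpost _ _ Hq) as [A B]. split.
      * intro Hin'. assert (s' <> s) by (intro; subst; contradiction).
        specialize (A (or_intror Hin')). unfold k', upd in A.
        destruct (Veq (v s') (v s)) as [e|ne]; [exfalso; apply vinj in e; congruence|exact A].
      * intro Hn'. destruct (classic (s' = s)) as [->|ne].
        -- specialize (A (or_introl eq_refl)). unfold k', upd in A.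
           destruct (Veq (v s) (v s)); [apply Key; exact A|congruence].
        -- eapply mon; [|apply B; intros [e|e]; [apply ne; auto|apply Hn'; exact e]].
           intros i y' H'; left; exact H'.
    + split; [intro; contradiction|intro; apply Key; exact Sy].
Qed.

Variables (d : D -> T D) (hd : forall s, lam (lab s) D (singletons (xs s)) (d s)).

Lemma claim2 n : forall vis s k, meas vis <= n ->
  (forall s', In s' vis -> forall y, @beh_equiv T fmap D d s' X xi y -> k (v s') y) ->
  forall x, @beh_equiv T fmap D d s X xi x -> semV X xi k (phiF n s vis) x.
Proof.
  induction n; intros vis s k Hm Hk x Hx; simpl.
  - apply Hk; auto. apply meas0. lia.
  - destruct (excluded_middle_informative (In s vis)) as [Hi|Hn]; simpl; [apply Hk; auto|].
    pose proof (meas_lt s vis Hn) as Hlt.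
    exists (fun y => @beh_equiv T fmap D d s X xi y). split; auto.
    intros y Hy. simpl. apply (lemmaB D X d xi lab xs hd) in Hy. eapply mon; [|exact Hy].
    intros i y' Hb. apply IHn; auto; [lia|].
    intros s' [e|Hin] y0 Hb0; unfold upd.
    + subst s'. destruct (Veq (v s) (v s)) as [_|ne]; [exact Hb0|congruence].
    + destruct (Veq (v s') (v s)) as [e|ne].
      * apply vinj in e. subst. contradiction.
      * apply Hk; auto.
Qed.
End Sys.


Lemma part2 (Vinf : exists f : nat -> V, forall m n, f m = f n -> m = n)
  (Hexpr : @strongly_expressive T Lab ar lam)
  (D : Type) (d : D -> T D) (z0 : D) : finite_type D ->
  exists phi : Expr V ar, closed phi /\ guarded phi /\
    forall (X : Type) (xi : X -> T X) (x : X),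
      @sem_closed T Lab ar lam V Veq X xi phi x <-> @beh_equiv T fmap D d z0 X xi x.
Proof.
  intros [ld Hld]. destruct Vinf as [f finj].
  assert (Hc : forall s, {l : Lab & {xs : Fin.t (ar l) -> D |
                forall t', lam l D (singletons xs) t' <-> t' = d s}}).
  { intro s. destruct (constructive_indefinite_description _ (Hexpr D (d s))) as [l Hl].
    exists l. apply constructive_indefinite_description. exact Hl. }
  set (lab := fun s => projT1 (Hc s)).
  set (xs := fun s => proj1_sig (projT2 (Hc s)) : Fin.t (ar (lab s)) -> D).
  assert (hd : forall s, lam (lab s) D (singletons (xs s)) (d s)).
  { intro s. apply (proj2_sig (projT2 (Hc s))). reflexivity. }
  set (v := fun s => f (proj1_sig (constructive_indefinite_description _ (In_nth_error ld s (Hld s))))).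
  assert (vinj : forall a b, v a = v b -> a = b).
  { intros a b E. unfold v in E. apply finj in E.
    destruct (constructive_indefinite_description _ (In_nth_error ld a (Hld a))) as [na Ha].
    destruct (constructive_indefinite_description _ (In_nth_error ld b (Hld b))) as [nb Hb].
    simpl in E. subst. congruence. }
  exists (phiF D lab xs v (meas D ld nil) z0 nil). split; [|split].
  - intros w Hw. apply (free_phi D lab xs v ld Hld vinj) in Hw; [|lia].
    destruct Hw as [s' [[] _]].
  - apply guarded_phi.
  - intros X xi x. unfold sem_closed. split.
    + intros H. apply (claim1 D lab xs v ld Hld vinj X xi) in H; [|lia].
      destruct H as [P [HP Px]].
      apply (lemmaA D X d xi lab xs hd P); auto.
      intros s y Hy. destruct (HP _ _ Hy) as [_ b]. apply b. intros [].
    + apply (claim2 D lab xs v ld Hld vinj X xi d hd); [lia|]. intros s' [].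
Qed.
End Main.

Theorem mainTheorem13
  (T : Type -> Type) (fmap : forall X Y : Type, (X -> Y) -> T X -> T Y)
  (HT : is_functor T fmap)
  (Lab : Type) (ar : Lab -> nat) (lam : forall l : Lab, plifting T (ar l))
  (Hnat : forall l, @is_natural T fmap (ar l) (lam l))
  (Hmon : forall l, @is_monotone T (ar l) (lam l))
  (Hsing : forall l, @is_singleton_preserving T (ar l) (lam l))
  (Hexpr : @strongly_expressive T Lab ar lam)
  (V : Type) (Veq : forall a b : V, {a = b} + {a <> b})
  (Vinf : exists f : nat -> V, forall m n, f m = f n -> m = n) :
  (forall phi : Expr V ar, @closed V Lab ar phi -> @guarded V Lab ar phi ->
     exists (D : Type) (d : D -> T D) (z : D), finite_type D /\
       forall (X : Type) (xi : X -> T X) (x : X),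
         @sem_closed T Lab ar lam V Veq X xi phi x <-> @beh_equiv T fmap D d z X xi x)
  /\
  (forall (D : Type) (d : D -> T D) (z : D), finite_type D ->
     exists phi : Expr V ar, @closed V Lab ar phi /\ @guarded V Lab ar phi /\
       forall (X : Type) (xi : X -> T X) (x : X),
         @sem_closed T Lab ar lam V Veq X xi phi x <-> @beh_equiv T fmap D d z X xi x).
Proof.
  split.
  - intros phi Hc Hg. exact (part1 T fmap HT Lab ar lam Hnat Hmon Hsing V Veq phi Hc Hg).
  - intros D d z Hf. exact (part2 T fmap HT Lab ar lam Hnat Hmon Hsing V Veq Vinf Hexpr D d z Hf).
Qed.
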